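(* Let $H$ be a uniform hypergraph and let $\mathcal W$ be a monomial walk with $\operatorname{supp}(\mathcal W)\subseteq E(H)$ and $|\mathcal W|=2n$. If $S$ is a proper splitting set of $\mathcal W$, then there exists a decomposition $(\Gamma_1,S,\Gamma_2)$ of $\mathcal W+S$ such that $|\Gamma_1|<|\mathcal W|$ and $|\Gamma_2|<|\mathcal W|$.
   Context: A hypergraph $H$ has vertex set $V=\{1,\dots,n'\}$ and a set $E(H)$ of edges, each a nonempty subset of $V$ (no repeated edges); it is uniform if all edges have the same size. Multisets of edges: $|M|$ is the size counted with multiplicity; $\operatorname{supp}(M)$ is the set of distinct elements; $M_1\sqcup M_2$ adds multiplicities; $M_1\cap M_2$ takes the minimum of multiplicities; $M_2\subseteq M_1$ means each multiplicity in $M_2$ is at most that in $M_1$; $M_2$ is a proper submultiset of $M_1$ if $M_2\subseteq M_1$ and $M_2\neq M_1$. A balanced edge set $\mathcal E$ is a pair of finite multisets $\mathcal E_{blue},\mathcal E_{red}$ of edges (a bicolored multiset) such that every vertex lies in the same number of blue edges as red edges, counted with multiplicity; its underlying multiset is $\mathcal E_{blue}\sqcup\mathcal E_{red}$, $\operatorname{supp}(\mathcal E)$ is the support of this, and $|\mathcal E|=|\mathcal E_{blue}|+|\mathcal E_{red}|$. When $H$ is uniform a balanced edge set is called a monomial walk. A balanced edge set $\mathcal E$ is reducible with separator $S$ and decomposition $(\Gamma_1,S,\Gamma_2)$ if $S$ is a nonempty multiset with $\operatorname{supp}(S)\subseteq\operatorname{supp}(\mathcal E)$, and there are balanced edge sets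 $\Gamma_1\neq\mathcal E$, $\Gamma_2\neq\mathcal E$ such that $S=\Gamma_{1,red}\cap\Gamma_{2,blue}$, the underlying multiset of $\mathcal E$ equals the sum of the underlying multisets of $\Gamma_1$ and $\Gamma_2$, and $\Gamma_{1,red},\Gamma_{2,red}\subseteq\mathcal E_{red}$ and $\Gamma_{1,blue},\Gamma_{2,blue}\subseteq\mathcal E_{blue}$. The separator is proper with respect to $(\Gamma_1,S,\Gamma_2)$ if $S$ is a proper submultiset of both $\Gamma_{1,red}$ and $\Gamma_{2,blue}$. For a balanced edge set $\mathcal E$ and a multiset $S$ of edges of $H$, $\mathcal E+S$ is the balanced edge set with blue part $\mathcal E_{blue}\sqcup S$ and red part $\mathcal E_{red}\sqcup S$. A nonempty multiset $S$ with $\operatorname{supp}(S)\subseteq E(H)$ is a splitting set of $\mathcal E$ with decomposition $(\Gamma_1,S,\Gamma_2)$ if $\mathcal E+S$ is reducible with separator $S$ and decomposition $(\Gamma_1,S,\Gamma_2)$; it is a proper splitting set of $\mathcal E$ if there is such a decomposition of $\mathcal E+S$ with respect to which $S$ is a proper separator. *)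

(* Defs.v *)
From mathcomp Require Import all_boot.
Set Implicit Arguments. Unset Strict Implicit. Unset Printing Implicit Defensive.

(* Vertices of a hypergraph are 'I_n' (standing for {1,...,n'}); an edge is a
   subset of vertices, i.e. an element of {set 'I_n'}. *)
Notation edge n' := {set 'I_n'}.

Definition is_hypergraph (n' : nat) (E : {set edge n'}) : Prop :=
  forall e, e \in E -> e != set0.

Definition uniform (n' : nat) (E : {set edge n'}) : Prop :=
  exists k, forall e, e \in E -> #|e| = k.

(* Finite multisets of edges, as multiplicity functions. *)
Definition mset (n' : nat) := {ffun edge n' -> nat}.

Definition msize n' (M : mset n') : nat := \sum_(e : edge n') M e.
Definition msupp n' (M : mset n') : {set edge n'} := [set e | 0 < M e].
Definition madd n' (M1 M2 : mset n') : mset n' := [ffun e => M1 e + M2 e].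
Definition mcap n' (M1 M2 : mset n') : mset n' := [ffun e => minn (M1 e) (M2 e)].
Definition msub n' (M2 M1 : mset n') : Prop := forall e, M2 e <= M1 e.
Definition mproper n' (M2 M1 : mset n') : Prop := msub M2 M1 /\ M2 <> M1.

Record bicolored (n' : nat) := Bicolored { blue : mset n'; red : mset n' }.

Definition underlying n' (G : bicolored n') : mset n' := madd (blue G) (red G).
Definition bsupp n' (G : bicolored n') : {set edge n'} := msupp (underlying G).
Definition bsize n' (G : bicolored n') : nat := msize (blue G) + msize (red G).

Definition balanced n' (G : bicolored n') : Prop :=
  forall v : 'I_n',
    \sum_(e : edge n' | v \in e) blue G e = \sum_(e : edge n' | v \in e) red G e.

Definition monomial_walk n' (E : {set edge n'}) (W : bicolored n') : Prop :=
  uniform E /\ balanced W.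

Definition decomposition n' (Ebs : bicolored n') (G1 : bicolored n') (S : mset n')
    (G2 : bicolored n') : Prop :=
  0 < msize S /\ msupp S \subset bsupp Ebs /\
  balanced G1 /\ balanced G2 /\ G1 <> Ebs /\ G2 <> Ebs /\
  S = mcap (red G1) (blue G2) /\
  underlying Ebs = madd (underlying G1) (underlying G2) /\
  msub (red G1) (red Ebs) /\ msub (red G2) (red Ebs) /\
  msub (blue G1) (blue Ebs) /\ msub (blue G2) (blue Ebs).

Definition proper_separator n' (G1 : bicolored n') (S : mset n') (G2 : bicolored n') : Prop :=
  mproper S (red G1) /\ mproper S (blue G2).

Definition addS n' (G : bicolored n') (S : mset n') : bicolored n' :=
  Bicolored (madd (blue G) S) (madd (red G) S).

Definition proper_splitting_set n' (E : {set edge n'}) (W : bicolored n') (S : mset n') : Prop :=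
  [/\ 0 < msize S, msupp S \subset E &
      exists G1 G2, decomposition (addS W S) G1 S G2 /\ proper_separator G1 S G2].

(* Main.v *)
Require Import Defs.
From mathcomp Require Import all_boot.
From mathcomp Require Import zify.
Set Implicit Arguments. Unset Strict Implicit. Unset Printing Implicit Defensive.

Lemma msize_madd n' (A B : mset n') : msize (madd A B) = msize A + msize B.
Proof. by rewrite /msize -big_split; apply: eq_bigr => e _; rewrite ffunE. Qed.

Lemma bsize_und n' (G : bicolored n') : bsize G = msize (underlying G).
Proof. by rewrite /bsize /underlying msize_madd. Qed.

Lemma wsum n' (f : mset n') :
  \sum_(v : 'I_n') \sum_(e : edge n' | v \in e) f e = \sum_(e : edge n') #|e| * f e.
Proof.
rewrite (exchange_big_dep predT) //=; apply: eq_bigr => e _.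
by rewrite sum_nat_const.
Qed.

Lemma msize_le n' (S M : mset n') : msub S M -> msize S <= msize M.
Proof. by move=> H; apply: leq_sum => e _; apply: H. Qed.

Lemma msize_proper n' (S M : mset n') : mproper S M -> msize S < msize M.
Proof.
move=> [Hs Hne].
have [/existsP [e He]|Hn] := boolP [exists e, S e != M e].
  rewrite /msize (bigD1 e) //= [X in _ < X](bigD1 e) //=.
  rewrite -addSn; apply: leq_add; first by rewrite ltn_neqAle He Hs.
  by apply: leq_sum => i _; apply: Hs.
exfalso; apply: Hne; apply/ffunP => e.
by apply/eqP; move: Hn; rewrite negb_exists => /forallP /(_ e); rewrite negbK.
Qed.

Lemma bal_eq n' (E : {set edge n'}) (G : bicolored n') :
  is_hypergraph E -> uniform E -> balanced G ->
  (forall e, 0 < blue G e -> e \in E) -> (forall e, 0 < red G e -> e \in E) ->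
  msize (blue G) = msize (red G).
Proof.
move=> Hh [k Hk] Hb HB HR.
have key : forall f : mset n', (forall e, 0 < f e -> e \in E) ->
    \sum_(e : edge n') #|e| * f e = k * msize f.
  move=> f Hf; rewrite /msize big_distrr /=; apply: eq_bigr => e _.
  case: (posnP (f e)) => [->|/Hf He]; first by rewrite !muln0.
  by rewrite Hk.
have Hz : forall f : mset n', (forall e, 0 < f e -> e \in E) -> k = 0 -> msize f = 0.
  move=> f Hf k0; rewrite /msize; apply: big1 => e _.
  case: (posnP (f e)) => [->|/Hf He] //.
  have := Hh e He; have := Hk e He; rewrite k0 => /eqP; rewrite cards_eq0 => /eqP ->.
  by rewrite eqxx.
have E1 : k * msize (blue G) = k * msize (red G).
  rewrite -(key _ HB) -(key _ HR) -!wsum; apply: eq_bigr => v _; exact: Hb.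
case: (posnP k) => [k0|kp]; first by rewrite (Hz _ HB k0) (Hz _ HR k0).
by apply/eqP; rewrite -(eqn_pmul2l kp) E1.
Qed.

Theorem lemma3p5 (n' : nat) (E : {set {set 'I_n'}}) (W : bicolored n') (S : mset n') (n : nat) :
  is_hypergraph E -> uniform E ->
  monomial_walk E W -> bsupp W \subset E -> bsize W = 2 * n ->
  proper_splitting_set E W S ->
  exists G1 G2 : bicolored n',
    decomposition (addS W S) G1 S G2 /\ bsize G1 < bsize W /\ bsize G2 < bsize W.
Proof.
move=> Hh Hu _ HW _ [HS0 HSE [G1 [G2 [Hd [Hp1 Hp2]]]]].
exists G1, G2; split => //.
have Hd' := Hd.
move: Hd' => [_ [_ [B1 [B2 [_ [_ [_ [Hund [r1 [r2 [b1 b2]]]]]]]]]]].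
have inE : forall e, 0 < S e \/ 0 < blue W e \/ 0 < red W e -> e \in E.
  move=> e [H|[H|H]].
    by apply: (subsetP HSE); rewrite inE.
  by apply: (subsetP HW); rewrite inE ffunE; lia.
  by apply: (subsetP HW); rewrite inE ffunE; lia.
have supB : forall (M : mset n'), msub M (blue (addS W S)) -> forall e, 0 < M e -> e \in E.
  move=> M HM e He; apply: inE; have := HM e; rewrite /= ffunE; lia.
have supR : forall (M : mset n'), msub M (red (addS W S)) -> forall e, 0 < M e -> e \in E.
  move=> M HM e He; apply: inE; have := HM e; rewrite /= ffunE; lia.
have e1 := bal_eq Hh Hu B1 (supB _ b1) (supR _ r1).
have e2 := bal_eq Hh Hu B2 (supB _ b2) (supR _ r2).
have l1 := msize_proper Hp1.
have l2 := msize_proper Hp2.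
have Hs : bsize G1 + bsize G2 = bsize W + 2 * msize S.
  rewrite !bsize_und -msize_madd -Hund -bsize_und /bsize /= !msize_madd; lia.
move: Hs; rewrite /bsize e1 e2 in l1 l2 *; lia.
Qed.
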